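(* Let $d$ be the discriminant of a real quadratic field and $p$ an odd prime not dividing $d$. Then $$\prod_{0<c<d/2}(-1)^{\lfloor pc/d\rfloor(\frac dc)}=\Big(\frac dp\Big)^{[d=8\text{ or } d\text{ is prime}]}.$$
   Context: $(\frac d{\cdot})$ is the Kronecker symbol (so $(\frac dc)=0$ when $\gcd(c,d)>1$); $\lfloor x\rfloor$ is the integer part. For an assertion $P$, $[P]=1$ if $P$ holds and $[P]=0$ otherwise. *)

(* Defs.v *)
From HB Require Import structures.
From mathcomp Require Import all_boot all_order all_algebra.
Set Implicit Arguments. Unset Strict Implicit. Unset Printing Implicit Defensive.
Import Order.TTheory GRing.Theory Num.Theory.

Definition squarefree (n : nat) : bool :=
  [forall p : 'I_n.+1, prime p ==> ~~ (p ^ 2 %| n)].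

Definition real_quad_disc (d : nat) : bool :=
  (1 < d) &&
  (((d %% 4 == 1) && squarefree d) ||
   ((d %% 4 == 0) && squarefree (d %/ 4) && ((d %/ 4) %% 4 \in [:: 2; 3]))).

Definition kron_prime (d q : nat) : int :=
  if q == 2 then
    (if ~~ ssrnat.odd d then 0%R
     else if ((d %% 8 == 1) || (d %% 8 == 7))%N then 1%R else (-1)%R)
  else if q %| d then 0%R
  else if [exists x : 'I_q, x ^ 2 == d %[mod q]] then 1%R else (-1)%R.

Definition kron (d n : nat) : int :=
  if n == 0 then (if d == 1 then 1%R else 0%R)
  else (\prod_(f <- prime_decomp n) kron_prime d f.1 ^+ f.2)%R.

(* Main.v *)
Require Import Defs.
From HB Require Import structures.
From mathcomp Require Import all_boot all_order all_algebra.
From mathcomp Require Import zify ring.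
Import Order.TTheory GRing.Theory Num.Theory.


Lemma mod_cancel n P x y : coprime P n -> x * P = y * P %[mod n] -> x = y %[mod n].
Proof.
move=> cop.
wlog le: x y / y <= x.
  move=> W E; case: (leqP y x) => h; first exact: W.
  by symmetry; apply: W; [exact: ltnW | symmetry].
move=> E; apply/eqP; rewrite eqn_mod_dvd //.
move/eqP: E; rewrite eqn_mod_dvd ?leq_mul2r ?le ?orbT // -mulnBl.
by rewrite Gauss_dvdl // coprime_sym.
Qed.

Lemma fermat1 a p : prime p -> coprime a p -> a ^ p.-1 = 1 %[mod p].
Proof.
move=> pp cop; apply: (@mod_cancel p a) => //.
rewrite mul1n -expnSr prednK ?prime_gt0 //; exact: fermat_little.
Qed.

Lemma prod_congr_mod n (I : eqType) (r : seq I) (F G : I -> nat) :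
  (forall i, i \in r -> F i = G i %[mod n]) ->
  \prod_(i <- r) F i = \prod_(i <- r) G i %[mod n].
Proof.
elim: r => [|i r IH] FG; rewrite ?big_nil ?big_cons //.
rewrite -modnMm FG ?mem_head // IH ?modnMm // => j hj.
by apply: FG; rewrite inE hj orbT.
Qed.

Lemma prod_const_seq (I : Type) (r : seq I) a : \prod_(i <- r) a = a ^ size r.
Proof. by elim: r => [|i r IH]; rewrite ?big_nil ?big_cons ?IH ?expnS. Qed.

Lemma gauss_abs n a (H : seq nat) (fold gval : nat -> nat) :
  uniq H -> (forall c, c \in H -> coprime c n) ->
  (forall c, c \in H -> fold (a * c) \in H) ->
  (forall c, c \in H -> a * c = fold (a * c) * gval (a * c) %[mod n]) ->
  {in H &, injective (fun c => fold (a * c))} ->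
  a ^ size H = \prod_(c <- H) gval (a * c) %[mod n].
Proof.
move=> uH copH inH eqH inj.
have pe : perm_eq (map (fun c => fold (a * c)) H) H.
  have u2 : uniq (map (fun c => fold (a * c)) H) by rewrite map_inj_in_uniq.
  have sub : {subset map (fun c => fold (a * c)) H <= H}.
    by move=> x /mapP [c hc ->]; apply: inH.
  have [_ eqs] := uniq_min_size u2 sub ltac:(by rewrite size_map).
  exact: uniq_perm.
set P := \prod_(c <- H) c.
have copP : coprime P n.
  rewrite /P big_seq; elim/big_ind: _ => //; first exact: coprime1n.
  by move=> x y cx cy; rewrite coprimeMl cx cy.
apply: (@mod_cancel n P) => //.
have E1 : \prod_(c <- H) (a * c) = a ^ size H * P.
  by rewrite big_split /= prod_const_seq.
rewrite -E1 (@prod_congr_mod n _ H _ _ eqH) big_split /= mulnC.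
by rewrite -(big_map (fun c => fold (a * c)) xpredT id) (perm_big _ pe).
Qed.

Lemma fold_perm a (H : seq nat) (fold : nat -> nat) :
  uniq H -> (forall c, c \in H -> fold (a * c) \in H) ->
  {in H &, injective (fun c => fold (a * c))} ->
  perm_eq (map (fun c => fold (a * c)) H) H.
Proof.
move=> uH inH inj.
have u2 : uniq (map (fun c => fold (a * c)) H) by rewrite map_inj_in_uniq.
have sub : {subset map (fun c => fold (a * c)) H <= H}.
  by move=> x /mapP [c hc ->]; apply: inH.
have [_ eqs] := uniq_min_size u2 sub ltac:(by rewrite size_map).
exact: uniq_perm.
Qed.

Definition Hs n := [seq c <- index_iota 1 n | (2 * c < n) && coprime c n].
Definition bigo n x := n < 2 * (x %% n).
Definition foldo n x := if bigo n x then n - x %% n else x %% n.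
Definition gvalo n x := if bigo n x then n.-1 else 1.

Lemma Hs_uniq n : uniq (Hs n).
Proof. by rewrite filter_uniq // iota_uniq. Qed.

Lemma mem_Hs n c : (c \in Hs n) = [&& 0 < c, c < n, 2 * c < n & coprime c n].
Proof.
rewrite mem_filter mem_index_iota.
by case: (0 < c); case: (c < n); case: (2 * c < n); case: coprime.
Qed.

Lemma prod_if (I : Type) (r : seq I) (P : pred I) x :
  \prod_(i <- r) (if P i then x else 1) = x ^ count P r.
Proof. by elim: r => [|i r IH]; rewrite ?big_nil ?big_cons //= IH expnD; case: (P i); rewrite ?mul1n. Qed.

Lemma coprime_sub r n : r <= n -> coprime (n - r) n = coprime r n.
Proof.
move=> le; rewrite /coprime.
have e : n = (n - r) + r by rewrite subnK.
have -> : gcdn (n - r) n = gcdn (n - r) r by rewrite {2}e gcdnDl.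
have -> : gcdn r n = gcdn r (n - r) by rewrite {1}e addnC gcdnDl.
by rewrite gcdnC.
Qed.

Lemma fold_pm n x : 0 < n -> (foldo n x = x %[mod n]) \/ (foldo n x + x = 0 %[mod n]).
Proof.
move=> n0; rewrite /foldo; case: (bigo n x).
  right; rewrite -modnDmr subnK ?modnn ?mod0n //; exact: ltnW (ltn_pmod _ n0).
by left; rewrite modn_mod.
Qed.

Section OddGauss.
Variables (n a : nat).
Hypotheses (nodd : odd n) (n1 : 1 < n) (cop : coprime a n).

Let n0 : 0 < n. Proof. exact: ltnW. Qed.

Lemma foldo_in c : c \in Hs n -> foldo n (a * c) \in Hs n.
Proof.
rewrite !mem_Hs => /and4P [c0 cn c2 cc].
set r := (a * c) %% n.
have rn : r < n by exact: ltn_pmod.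
have cr : coprime r n by rewrite coprime_modl coprimeMl cop cc.
have r0 : 0 < r.
  rewrite lt0n; apply/negP => /eqP r0; move: cr; rewrite r0 /coprime gcd0n => /eqP nn1.
  by move: n1; rewrite nn1.
have r2 : 2 * r != n.
  by apply/negP => /eqP e; move: nodd; rewrite -e oddM.
rewrite /foldo /bigo -/r; case: ifP => hb.
  rewrite coprime_sub ?(ltnW rn) // cr andbT; apply/and3P; split; lia.
rewrite cr andbT r0 rn /=; lia.
Qed.

Lemma foldo_eq c : a * c = foldo n (a * c) * gvalo n (a * c) %[mod n].
Proof.
rewrite /foldo /gvalo; case: ifP => _; last by rewrite muln1 modn_mod.
set r := (a * c) %% n.
have rn : r < n by exact: ltn_pmod.
have -> : (n - r) * n.-1 = (n - r - 1) * n + r by nia.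
by rewrite modnMDl modn_mod.
Qed.

Lemma foldo_inj : {in Hs n &, injective (fun c => foldo n (a * c))}.
Proof.
move=> c c'; rewrite !mem_Hs => /and4P [c0 cn c2 cc] /and4P [c0' cn' c2' cc'] /= e.
have key : (a * c = a * c' %[mod n]) \/ (a * c + a * c' = 0 %[mod n]).
  case: (fold_pm n (a * c) n0); case: (fold_pm n (a * c') n0); rewrite e.
  - by move=> h1 h2; left; rewrite -h2.
  - by move=> h1 h2; right; rewrite -modnDml -h2 modnDml h1.
  - by move=> h1 h2; right; rewrite -modnDmr -h1 modnDmr addnC h2.
  - move=> h1 h2; left; apply/eqP; rewrite -(eqn_modDl (foldo n (a * c'))).
    by apply/eqP; rewrite h1 h2.
case: key => h.
  have : c = c' %[mod n] by apply: (@mod_cancel n a) => //; rewrite mulnC h mulnC.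
  by rewrite !modn_small.
exfalso; move: h; rewrite -mulnDr mod0n => /eqP.
rewrite -/(dvdn n (a * (c + c'))) Gauss_dvdr; last by rewrite coprime_sym.
move=> dv; have : n <= c + c' by apply: dvdn_leq => //; lia.
lia.
Qed.

Lemma gauss_odd :
  a ^ size (Hs n) = (n.-1) ^ count (fun c => bigo n (a * c)) (Hs n) %[mod n].
Proof.
rewrite (@gauss_abs n a (Hs n) (foldo n) (gvalo n)) ?Hs_uniq //.
- by rewrite /gvalo prod_if.
- by move=> c; rewrite mem_Hs => /and4P [].
- exact: foldo_in.
- by move=> c _; exact: foldo_eq.
- exact: foldo_inj.
Qed.

Lemma sum_even (I : Type) (r : seq I) (F : I -> nat) :
  (forall i, ~~ odd (F i)) -> ~~ odd (\sum_(i <- r) F i).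
Proof.
move=> h; elim: r => [|i r IH]; rewrite ?big_nil ?big_cons //.
by rewrite oddD; move: (h i) IH; case: (odd (F i)); case: odd.
Qed.

Lemma parity_odd : odd a ->
  odd (\sum_(c <- Hs n) (a * c) %/ n) = odd (count (fun c => bigo n (a * c)) (Hs n)).
Proof.
move=> aodd.
have each c : ~~ odd ((a * c) %/ n + c + foldo n (a * c) + bigo n (a * c)).
  have hr := divn_eq (a * c) n.
  have rn : (a * c) %% n < n by exact: ltn_pmod.
  have oc : odd (a * c) = odd c by rewrite oddM aodd.
  rewrite /foldo; move: oc; rewrite {1}hr oddD oddM nodd andbT.
  case: (bigo n (a * c)) => /=; rewrite !oddD ?oddB ?(ltnW rn) ?nodd //=;
  by case: (odd (_ %/ _)); case: (odd (_ %% _)); case: (odd c).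
have := @sum_even _ (Hs n) _ each.
rewrite !big_split /= -sum1_count.
have -> : \sum_(c <- Hs n) foldo n (a * c) = \sum_(c <- Hs n) c.
  rewrite -(big_map (fun c => foldo n (a * c)) xpredT id).
  apply: perm_big; apply: fold_perm; [exact: Hs_uniq | exact: foldo_in | exact: foldo_inj].
rewrite !oddD.
have -> : \sum_(j <- Hs n | bigo n (a * j)) 1 = \sum_(i <- Hs n) (bigo n (a * i) : nat).
  by rewrite big_mkcond; apply: eq_bigr => i _; case: bigo.
case: (odd (\sum_(i <- Hs n) (a * i) %/ n)); case: (odd (\sum_(i <- Hs n) i));
  by case: (odd (\sum_(i <- Hs n) (bigo n (a * i) : nat))).
Qed.

End OddGauss.

Lemma pow_nm1 n k : 1 < n -> (n.-1) ^ k = (if odd k then n.-1 else 1) %[mod n].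
Proof.
move=> n1; elim: k => [|k IH] //=; rewrite expnS -modnMmr IH modnMmr.
case: (odd k) => /=; last by rewrite muln1.
have -> : n.-1 * n.-1 = (n - 2) * n + 1 by nia.
by rewrite modnMDl.
Qed.

Lemma count_sumn (I : Type) (r : seq I) (P : pred I) : count P r = \sum_(i <- r) (P i : nat).
Proof. by elim: r => [|x r IH]; rewrite ?big_nil ?big_cons //= IH. Qed.

Lemma size_Hs n : size (Hs n) = \sum_(1 <= c < n) ((2 * c < n) && coprime c n : nat).
Proof. by rewrite size_filter count_sumn. Qed.

Lemma totient_Hs n : 2 < n -> totient n = 2 * size (Hs n).
Proof.
move=> n2; rewrite totient_count_coprime big_ltn; last by lia.
rewrite /coprime gcdn0.
have -> : n == 1 = false by apply/negbTE; lia.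
rewrite add0n.
have e1 : \sum_(1 <= c < n) (gcdn n c == 1 : nat) =
   \sum_(1 <= c < n) ((2 * c < n) && coprime c n : nat) +
   \sum_(1 <= c < n) ((n < 2 * c) && coprime c n : nat).
  rewrite -big_split /=; apply: eq_big_nat => c /andP [c1 cn].
  rewrite gcdnC -/(coprime c n).
  case: (ltngtP (2 * c) n) => h //=; rewrite ?addn0 //.
  have -> : coprime c n = false.
    apply/negbTE; rewrite /coprime; have dv : c %| n by rewrite -h dvdn_mull.
    by rewrite (gcdn_idPl dv); lia.
  by [].
rewrite e1 size_Hs mul2n -addnn; congr (_ + _).
rewrite big_nat_rev /=; apply: eq_big_nat => c /andP [c1 cn].
have -> : 1 + n - c.+1 = n - c by lia.
rewrite coprime_sub ?(ltnW cn) //.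
by congr (nat_of_bool (_ && _)); lia.
Qed.

Lemma sqf_P n q : squarefree n -> 0 < n -> prime q -> ~~ (q ^ 2 %| n).
Proof.
move=> /forallP sq n0 pq; apply/negP => dv.
have qn : q <= n.
  apply: leq_trans (dvdn_leq n0 dv); rewrite expnS expn1 leq_pmulr //; exact: prime_gt0.
have := sq (inord q); rewrite inordK ?ltnS // pq /= => /negP; apply; exact: dv.
Qed.

Lemma odd_composite_even d p : odd d -> 1 < d -> squarefree d -> ~~ prime d ->
  prime p -> odd p -> ~~ (p %| d) ->
  ~~ odd (\sum_(c <- Hs d) (p * c) %/ d).
Proof.
move=> dodd d1 sqd npd pp podd pnd.
have copd : coprime p d by rewrite prime_coprime.
rewrite (@parity_odd d p dodd d1 copd podd).
have G := @gauss_odd d p dodd d1 copd.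
set mu := count _ _ in G *.
apply/negP => omu.
move: G; rewrite pow_nm1 // omu => G.
set q := pdiv d.
have pq : prime q by exact: pdiv_prime.
have qd : q %| d by exact: pdiv_dvd.
set d' := d %/ q.
have dE : d = q * d' by rewrite /d' mulnC divnK.
have q0 : 0 < q by exact: prime_gt0.
have d'0 : 0 < d' by rewrite /d' divn_gt0 // dvdn_leq //; lia.
have d'1 : 1 < d'.
  case: (ltngtP d' 1) => // h; first lia.
  by move: npd; rewrite dE h muln1 pq.
have d'odd : odd d' by move: dodd; rewrite dE oddM => /andP [].
have qodd : odd q by move: dodd; rewrite dE oddM => /andP [].
have copq : coprime q d'.
  rewrite prime_coprime //; apply/negP => h; move: (@sqf_P d q sqd ltac:(lia) pq).
  by rewrite dE expnS expn1 dvdn_pmul2l // h.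
have T := totient_coprime copq; rewrite -dE (totient_prime pq) in T.
have d3 : 2 < d by have := modn2 d; rewrite dodd /= => ?; lia.
have d'3 : 2 < d' by have := modn2 d'; rewrite d'odd /= => ?; lia.
have sz : size (Hs d) = q.-1 * size (Hs d').
  move: T; rewrite (totient_Hs d d3) (totient_Hs d' d'3); lia.
have pcq : coprime p q.
  rewrite coprime_sym prime_coprime //; apply/negP => h.
  have : q = p by apply/eqP; rewrite -dvdn_prime2.
  by move=> e; move: pnd; rewrite -e qd.
have F := fermat1 p q pq pcq; rewrite sz expnM in G.
have Gq : (p ^ q.-1) ^ size (Hs d') = d.-1 %[mod q].
  by rewrite -(modn_dvdm _ qd) G (modn_dvdm _ qd).
rewrite -modnXm F modnXm exp1n in Gq.
have h2 : q %| d.-1 - 1.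
  rewrite -eqn_mod_dvd; first by apply/eqP; rewrite Gq.
  clear -d3; lia.
have h3 : q %| 2.
  have -> : 2 = d - (d.-1 - 1) by clear -d3; lia.
  by rewrite dvdn_sub.
have q2 : q <= 2 by apply: dvdn_leq.
have : q <> 2 by move=> e; move: qodd; rewrite e.
have : 1 < q by exact: prime_gt1.
clear -q2; lia.
Qed.


Lemma Fp_eq p m n : prime p -> ((m%:R : 'F_p) == n%:R)%R = (m == n %[mod p]).
Proof.
move=> pp; apply/eqP/eqP => [e | e].
  by have := congr1 (@nat_of_ord _) e; rewrite !val_Fp_nat.
by rewrite -(Fp_nat_mod pp) e Fp_nat_mod.
Qed.

Lemma sq_inj p i j : prime p -> 0 < i -> 0 < j -> i + j < p ->
  i ^ 2 = j ^ 2 %[mod p] -> i = j.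
Proof.
move=> pp; wlog le : i j / j <= i.
  move=> W i0 j0 ij e; case: (leqP j i) => h; first exact: W.
  symmetry; apply: W => //; try lia; by symmetry.
move=> i0 j0 ij /eqP; rewrite eqn_mod_dvd ?leq_exp2r // subn_sqr Euclid_dvdM //.
case/orP => h.
  have : i - j = 0.
    apply/eqP; apply/negP => ne; have := dvdn_leq (_ : 0 < i - j) h; lia.
  lia.
have := dvdn_leq (_ : 0 < i + j) h; lia.
Qed.

Lemma euler_crit p x : prime p -> odd p -> coprime x p ->
  [exists y : 'I_p, y ^ 2 == x %[mod p]] = (x ^ (p %/ 2) == 1 %[mod p]).
Proof.
move=> pp podd cx.
have p2 : p.-1 = 2 * (p %/ 2).
  have := modn2 p; rewrite podd => /= h; have := divn_eq p 2; lia.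
apply/idP/idP.
  case/existsP => y /eqP e.
  have cy : coprime y p.
    by rewrite -(@coprime_pexpl 2) // -coprime_modl e coprime_modl.
  by rewrite -modnXm -e modnXm -expnM -p2; apply/eqP; apply: fermat1.
move=> /eqP hx; apply: contraT => nsq.
set h := p %/ 2.
have h0 : 0 < h by have := prime_gt1 pp; have := modn2 p; rewrite podd /=; lia.
pose P : {poly 'F_p} := ('X^h - 1%:P)%R.
pose rs : seq 'F_p := ((x%:R)%R :: [seq ((i ^ 2)%:R)%R | i <- iota 1 h]).
have szP : size P = h.+1 by rewrite size_XnsubC.
have P0 : P != 0%R by rewrite -size_poly_eq0 szP.
have rootP : all (root P) rs.
  apply/allP => z; rewrite inE => /orP [/eqP -> | /mapP [i hi ->]];
    rewrite /root /P !hornerE subr_eq0 -natrX -[1%R]/(1%:R)%R Fp_eq //; apply/eqP.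
    exact: hx.
  rewrite -expnM -p2; apply: fermat1 => //.
  rewrite mem_iota in hi; rewrite coprime_sym prime_coprime //; apply/negP => dv.
  have := dvdn_leq (_ : 0 < i) dv; lia.
have urs : uniq rs.
  rewrite /rs /= map_inj_in_uniq ?iota_uniq ?andbT.
    apply/mapP => [[i hi e]]; move/negP: nsq; apply; apply/existsP.
    rewrite mem_iota in hi.
    have ip : i < p by rewrite /h in hi; have := divn_eq p 2; lia.
    exists (Ordinal ip) => /=.
    by rewrite -Fp_eq // -e.
  move=> i j; rewrite !mem_iota => hi hj /eqP; rewrite Fp_eq // => /eqP e.
  apply: (sq_inj _ _ _ pp) => //; rewrite /h in hi hj; have := divn_eq p 2; lia.
have := max_poly_roots P0 rootP urs.
by rewrite szP /= size_map size_iota ltnn.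
Qed.

Lemma sum_le_cnt B k : \sum_(1 <= y < B.+1) (y <= k : nat) = minn B k.
Proof.
elim: B => [|B IH]; first by rewrite big_geq //; lia.
rewrite big_nat_recr //= IH; case: (leqP B.+1 k) => h /=; lia.
Qed.

Lemma floor_cnt m d B : 0 < d -> m %/ d <= B ->
  m %/ d = \sum_(1 <= y < B.+1) (y * d <= m : nat).
Proof.
move=> d0 hB; rewrite (eq_big_nat _ _ (F2 := fun y => (y <= m %/ d : nat))).
  by rewrite sum_le_cnt; lia.
by move=> y _; rewrite leq_divRL.
Qed.

Lemma eisenstein p d : prime p -> prime d -> p != d -> odd p -> odd d ->
  \sum_(1 <= x < (d %/ 2).+1) (p * x) %/ d + \sum_(1 <= y < (p %/ 2).+1) (d * y) %/ p
  = (d %/ 2) * (p %/ 2).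
Proof.
move=> pp pd pnd podd dodd.
set A := d %/ 2; set B := p %/ 2.
have hA : d = 2 * A + 1 by have := modn2 d; rewrite dodd /=; have := divn_eq d 2; lia.
have hB : p = 2 * B + 1 by have := modn2 p; rewrite podd /=; have := divn_eq p 2; lia.
have d0 : 0 < d by exact: prime_gt0.
have p0 : 0 < p by exact: prime_gt0.
have cdp : coprime d p by rewrite prime_coprime // dvdn_prime2 // eq_sym.
have neq : forall x y, 0 < x <= A -> p * x != d * y.
  move=> x y /andP [x0 xA]; apply/eqP => e.
  have : d %| x by rewrite -(Gauss_dvdr _ cdp) e dvdn_mulr.
  move/(dvdn_leq x0); lia.
rewrite (eq_big_nat _ _ (F2 := fun x => \sum_(1 <= y < B.+1) (y * d <= p * x : nat))); last first.
  move=> x /andP [x0 xA]; apply: floor_cnt => //.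
  rewrite -ltnS ltn_divLR //; nia.
rewrite [X in _ + X](eq_big_nat _ _ (F2 := fun y => \sum_(1 <= x < A.+1) (x * p <= d * y : nat))); last first.
  move=> y /andP [y0 yB]; apply: floor_cnt => //.
  rewrite -ltnS ltn_divLR //; nia.
rewrite [X in _ + X]exchange_big_nat -big_split /=.
rewrite (eq_big_nat _ _ (F2 := fun x => B)).
  by rewrite sum_nat_const_nat subn1 /= mulnC.
move=> x /andP [x0 xA].
rewrite -big_split /= (eq_big_nat _ _ (F2 := fun y => 1)).
  by rewrite sum_nat_const_nat subn1 muln1.
move=> y _; have := neq x y ltac:(lia); move=> /eqP ne.
rewrite [x * p]mulnC [y * d]mulnC.
case: (leqP (d * y) (p * x)) => h1; case: (leqP (p * x) (d * y)) => h2 //=; lia.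
Qed.

Section PartE.
Local Open Scope ring_scope.

Lemma kron_prime0 d q : prime q -> (q %| d)%N -> kron_prime d q = 0.
Proof.
move=> pq qd; rewrite /kron_prime; case: eqP => [e|_]; last by rewrite qd.
by move: qd; rewrite e dvdn2 => ->.
Qed.

Lemma kron_prime_sq d q : prime q -> ~~ (q %| d)%N -> kron_prime d q ^+ 2 = 1.
Proof.
move=> pq qd; rewrite /kron_prime; case: eqP => [e|_].
  move: qd; rewrite e dvdn2 negbK => ->; by case: ifP.
by rewrite (negbTE qd); case: ifP.
Qed.

Lemma kronE d c : (0 < c)%N ->
  kron d c = \prod_(q <- primes c) kron_prime d q ^+ logn q c.
Proof.
move=> c0; rewrite /kron; case: eqP => [e|_]; first by rewrite e in c0.
by rewrite prime_decompE big_map.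
Qed.

Lemma kron_cop d c : (0 < c)%N -> coprime c d -> kron d c ^+ 2 = 1.
Proof.
move=> c0 cop; rewrite kronE // big_seq.
elim/big_rec: _ => [|q x hq IH]; first by rewrite expr1n.
rewrite exprMn IH mulr1 -exprM mulnC exprM kron_prime_sq ?expr1n //.
  by move: hq; rewrite mem_primes => /and3P [].
move: hq; rewrite mem_primes => /and3P [pq _ qc]; apply/negP => qd.
move: cop; rewrite /coprime => /eqP g.
have : (q %| gcdn c d)%N by rewrite dvdn_gcd qc qd.
by rewrite g dvdn1 => /eqP e; move: pq; rewrite e.
Qed.

Lemma kron_ncop d c : (0 < c)%N -> (0 < d)%N -> ~~ coprime c d -> kron d c = 0.
Proof.
move=> c0 d0 ncop; move: ncop; rewrite coprime_has_primes // negbK => /hasP [q qd qc].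
rewrite kronE // (big_rem q) //=.
rewrite kron_prime0; first by rewrite expr0n; case: eqP => [e|_]; rewrite ?mul0r //;
   move: qc; rewrite -logn_gt0 e.
  by move: qc; rewrite mem_primes => /and3P [].
by move: qd; rewrite mem_primes => /and3P [].
Qed.

Lemma sign_z (k : nat) (z : int) : z ^+ 2 = 1 -> (-1 : int) ^ (k%:Z * z) = (-1) ^+ k.
Proof.
move/eqP; rewrite sqrf_eq1 => /orP [] /eqP ->; first by rewrite mulr1.
by rewrite mulrN1 -exprz_inv invrN1.
Qed.

Lemma sign_sum (I : Type) (r : seq I) (F : I -> nat) :
  (-1 : int) ^+ (\sum_(i <- r) F i)%N = \prod_(i <- r) (-1) ^+ F i.
Proof. by elim: r => [|i r IH]; rewrite ?big_nil ?big_cons ?exprD ?IH. Qed.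

Lemma lhs_red d p : (1 < d)%N ->
  \prod_(1 <= c < d | (2 * c < d)%N) ((-1 : int) ^ (((p * c) %/ d)%N%:Z * kron d c))
  = (-1) ^+ (\sum_(c <- Hs d) (p * c) %/ d)%N.
Proof.
move=> d1; rewrite sign_sum /Hs big_filter [RHS]big_mkcond [LHS]big_mkcond.
apply: eq_big_nat => c /andP [c0 cd].
case: (2 * c < d)%N => //=.
case: (boolP (coprime c d)) => cop.
  by rewrite sign_z // kron_cop.
by rewrite kron_ncop ?mulr0 // ltnW.
Qed.

End PartE.

Lemma pm_inj n a (fold : nat -> nat) : 0 < n -> coprime a n ->
  (forall x, fold x = x %[mod n] \/ fold x + x = 0 %[mod n]) ->
  {in Hs n &, injective (fun c => fold (a * c))}.
Proof.
move=> n0 cop fpm c c'; rewrite !mem_Hs => /and4P [c0 cn c2 cc] /and4P [c0' cn' c2' cc'] /= e.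
have key : (a * c = a * c' %[mod n]) \/ (a * c + a * c' = 0 %[mod n]).
  case: (fpm (a * c)); case: (fpm (a * c')); rewrite e.
  - by move=> h1 h2; left; rewrite -h2.
  - by move=> h1 h2; right; rewrite -modnDml -h2 modnDml h1.
  - by move=> h1 h2; right; rewrite -modnDmr -h1 modnDmr addnC h2.
  - move=> h1 h2; left; apply/eqP; rewrite -(eqn_modDl (fold (a * c'))).
    by apply/eqP; rewrite h1 h2.
case: key => h.
  have : c = c' %[mod n] by apply: (@mod_cancel n a) => //; rewrite mulnC h mulnC.
  by rewrite !modn_small.
exfalso; move: h; rewrite -mulnDr mod0n => /eqP.
rewrite -/(dvdn n (a * (c + c'))) Gauss_dvdr; last by rewrite coprime_sym.
move=> dv; have : n <= c + c' by apply: dvdn_leq => //; lia.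
lia.
Qed.

Lemma coprime_subl r d : d <= r -> coprime (r - d) d = coprime r d.
Proof.
move=> le; rewrite /coprime gcdnC [gcdn r d]gcdnC.
have e : r = d + (r - d) by rewrite subnKC.
by rewrite {2}e gcdnDl.
Qed.

Definition foldr d r :=
  if 2 * r < d then r else if r < d then d - r else if 2 * r < 3 * d then r - d else 2 * d - r.
Definition gvalr d r :=
  if 2 * r < d then 1 else if r < d then d.-1 else if 2 * r < 3 * d then d.+1 else (2 * d).-1.
Definition folde d x := foldr d (x %% (2 * d)).
Definition gvale d x := gvalr d (x %% (2 * d)).

Lemma arith2 e s : s < e -> (2 * e - (2 * s + 1)) * (2 * e).-1 = (2 * (2 * e)) * (e - s - 1) + (2 * s + 1).
Proof. move=> h; nia. Qed.
Lemma arith3 e s : e <= s -> 2 * s + 1 < 4 * e ->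
  (2 * s + 1 - 2 * e) * (2 * e).+1 = (2 * (2 * e)) * (s - e) + (2 * s + 1).
Proof. move=> h h'; nia. Qed.
Lemma arith4 N r : r < N -> (N - r) * N.-1 = N * (N - 1 - r) + r.
Proof. move=> h; nia. Qed.

Section Core.
Variables (d r : nat).
Hypotheses (d4 : d %% 4 = 0) (d0 : 0 < d) (r2 : r %% 2 = 1) (rd : r < 2 * d) (cr : coprime r d).

Lemma foldr_in : foldr d r \in Hs d.
Proof.
rewrite /foldr mem_Hs; case: ifP => h1.
  by rewrite cr andbT; apply/and3P; split; lia.
case: ifP => h2.
  by rewrite coprime_sub ?cr ?andbT; [apply/and3P; split; lia | lia].
case: ifP => h3.
  by rewrite coprime_subl ?cr ?andbT; [apply/and3P; split; lia | lia].
have -> : 2 * d - r = d - (r - d) by lia.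
rewrite coprime_sub ?coprime_subl ?cr ?andbT; try lia.
Qed.

Lemma foldr_eq : r = foldr d r * gvalr d r %[mod 2 * d].
Proof.
set e := d %/ 2; set s := r %/ 2.
have de : d = 2 * e by rewrite /e; have := divn_eq d 2; lia.
have rs : r = 2 * s + 1 by rewrite /s; have := divn_eq r 2; lia.
rewrite /foldr /gvalr; case: ifP => h1; first by rewrite muln1.
case: ifP => h2.
  have eq : (d - r) * d.-1 = (e - s - 1) * (2 * d) + r.
    by rewrite de rs arith2 ?[_ * (2 * (2 * e))]mulnC //; lia.
  by rewrite eq modnMDl.
case: ifP => h3.
  have eq : (r - d) * d.+1 = (s - e) * (2 * d) + r.
    by rewrite de rs arith3 ?[_ * (2 * (2 * e))]mulnC //; lia.
  by rewrite eq modnMDl.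
by rewrite arith4 // [_ * (_ - 1 - _)]mulnC modnMDl.
Qed.

End Core.

Lemma foldr_pm d r : r < 2 * d -> foldr d r = r %[mod d] \/ foldr d r + r = 0 %[mod d].
Proof.
move=> rd; rewrite /foldr; case: ifP => h1; first by left.
case: ifP => h2; first by right; rewrite subnK ?modnn ?mod0n //; lia.
case: ifP => h3.
  left; have -> : r = (r - d) + d by lia.
  by rewrite modnDr addnK.
by right; rewrite subnK ?modnMl ?mod0n //; lia.
Qed.


Lemma Hs_odd d c : d %% 4 = 0 -> c \in Hs d -> odd c.
Proof.
move=> d4; rewrite mem_Hs => /and4P [_ _ _ cc]; apply: contraLR cc => ev.
rewrite /coprime; apply/eqP => g.
have : 2 %| gcdn c d by rewrite dvdn_gcd dvdn2 ev /= (@dvdn_trans 4) // /dvdn d4.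
by rewrite g.
Qed.

Lemma even_gauss d a : d %% 4 = 0 -> 0 < d -> coprime a d -> odd a ->
  a ^ size (Hs d) = \prod_(c <- Hs d) gvale d (a * c) %[mod 2 * d].
Proof.
move=> d4 d0 cop aodd.
have facts : forall c, c \in Hs d ->
   [/\ coprime ((a * c) %% (2 * d)) d, (a * c) %% (2 * d) %% 2 = 1 & (a * c) %% (2 * d) < 2 * d].
  move=> c hc; have codd := Hs_odd _ _ d4 hc.
  move: hc; rewrite mem_Hs => /and4P [_ _ _ cc].
  have xodd : odd (a * c) by rewrite oddM aodd codd.
  have c2d : coprime (a * c) (2 * d) by rewrite coprimeMr coprimen2 xodd coprimeMl cop cc.
  split.
  - by move: c2d; rewrite -coprime_modl coprimeMr => /andP [].
  - by rewrite modn2 odd_mod; [rewrite xodd | rewrite oddM].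
  - by apply: ltn_pmod; rewrite muln_gt0 d0.
apply: (@gauss_abs (2 * d) a (Hs d) (folde d) (gvale d)).
- exact: Hs_uniq.
- move=> c hc; have codd := Hs_odd _ _ d4 hc; move: hc; rewrite mem_Hs => /and4P [_ _ _ cc].
  by rewrite coprimeMr coprimen2 codd.
- by move=> c /facts [h1 h2 h3]; apply: foldr_in.
- move=> c /facts [h1 h2 h3]; by rewrite /folde /gvale -foldr_eq // modn_mod.
- apply: (@pm_inj d a (folde d)) => // x.
  have rmod : x %% (2 * d) = x %[mod d] by rewrite modn_dvdm // dvdn_mull.
  rewrite /folde.
  case: (@foldr_pm d (x %% (2 * d))) => [|h|h]; [by apply: ltn_pmod; rewrite muln_gt0 d0 | left | right].
  + by rewrite h.
  + by rewrite -modnDmr -rmod modnDmr h.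


Qed.

Lemma odd_div_even x d : 0 < d -> odd (x %/ d) = (d <= x %% (2 * d)).
Proof.
move=> d0; have e := modn2 (x %/ d); rewrite modn_divl in e.
have h : x %% (2 * d) < 2 * d by apply: ltn_pmod; rewrite muln_gt0 d0.
have q1 : x %% (2 * d) %/ d = (d <= x %% (2 * d)).
  case: (leqP d (x %% (2 * d))) => h1 /=.
    apply/eqP; rewrite eqn_leq; apply/andP; split.
      by rewrite -ltnS ltn_divLR // mul2n -addnn.
    by rewrite leq_divRL // mul1n.
  by rewrite divn_small.
move: e; rewrite q1; case: (odd _); case: (_ <= _) => //.
Qed.

Definition SK K := [:: 1; K %/ 2 - 1; K %/ 2 + 1; K - 1].
Definition chiK K x := (x %% K == 1) || (x %% K == K %/ 2 - 1).

Lemma table K : K = 8 \/ K = 16 ->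
  forall a b, a \in SK K -> b \in SK K ->
   ((a * b) %% K \in SK K) && (chiK K (a * b) == (chiK K a == chiK K b)).
Proof.
by case=> ->; move=> a b; rewrite !inE => /or4P [] /eqP -> /or4P [] /eqP ->.
Qed.

Lemma chi_mod K x : chiK K (x %% K) = chiK K x.
Proof. by rewrite /chiK modn_mod. Qed.

Lemma chi_prod K (HK : K = 8 \/ K = 16) (I : eqType) (r : seq I) (g : I -> nat) :
  (forall i, i \in r -> g i %% K \in SK K) ->
  ((\prod_(i <- r) g i) %% K \in SK K) /\
  chiK K (\prod_(i <- r) g i) = ~~ odd (count (fun i => ~~ chiK K (g i)) r).
Proof.
have K1 : 1 < K by case: HK => ->.
elim: r => [|i r IH] hg; rewrite ?big_nil ?big_cons /=.
  by rewrite /chiK modn_small // eqxx; split => //; rewrite inE modn_small.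
have [h1 h2] := IH (fun j hj => hg j ltac:(by rewrite inE hj orbT)).
have hi := hg i (mem_head i r).
have /andP [m1 /eqP m2] := @table K HK _ _ hi h1.
rewrite -modnMm; split => //.
rewrite -chi_mod -modnMm chi_mod m2 !chi_mod h2 oddD.
by case: (chiK K (g i)); case: odd.
Qed.

Lemma odd_sum_count (I : Type) (r : seq I) (F : I -> nat) :
  odd (\sum_(i <- r) F i) = odd (count (fun i => odd (F i)) r).
Proof.
elim: r => [|i r IH]; rewrite ?big_nil ?big_cons //= oddD IH oddD.
by case: (odd (F i)).
Qed.

Lemma gval_facts K d r : (K = 8 /\ d %% 8 = 4) \/ (K = 16 /\ d %% 16 = 8) -> r < 2 * d ->
  gvalr d r %% K \in SK K /\ chiK K (gvalr d r) = ~~ (d <= r).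
Proof.
move=> HKd rd; rewrite /gvalr /chiK /SK.
case: ifP => h1.
  have -> : (d <= r) = false by apply/negbTE; rewrite -ltnNge; lia.
  by case: HKd => [[-> _]|[-> _]].
case: ifP => h2.
  have -> : (d <= r) = false by apply/negbTE; rewrite -ltnNge; lia.
  case: HKd => [[-> h]|[-> h]].
    by have -> : d.-1 %% 8 = 3 by lia.
  by have -> : d.-1 %% 16 = 7 by lia.
have -> : (d <= r) = true by lia.
case: ifP => h3.
  case: HKd => [[-> h]|[-> h]].
    by have -> : d.+1 %% 8 = 5 by lia.
  by have -> : d.+1 %% 16 = 9 by lia.
case: HKd => [[-> h]|[-> h]].
  by have -> : (2 * d).-1 %% 8 = 7 by lia.
by have -> : (2 * d).-1 %% 16 = 15 by lia.
Qed.

Lemma even_case d p K : d %% 4 = 0 -> 0 < d -> coprime p d -> odd p ->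
  (K = 8 /\ d %% 8 = 4) \/ (K = 16 /\ d %% 16 = 8) ->
  p ^ size (Hs d) = 1 %[mod K] ->
  ~~ odd (\sum_(c <- Hs d) (p * c) %/ d).
Proof.
move=> d4 d0 cop podd HKd pw.
have HK : K = 8 \/ K = 16 by case: HKd => [[-> _]|[-> _]]; [left|right].
have Kd : K %| 2 * d.
  case: HKd => [[-> h]|[-> h]]; apply/dvdnP.
    by exists (d %/ 4); have := divn_eq d 8; have := divn_eq d 4; lia.
  by exists (d %/ 8); have := divn_eq d 16; have := divn_eq d 8; lia.
have G := even_gauss d p d4 d0 cop podd.
have GK : \prod_(c <- Hs d) gvale d (p * c) = 1 %[mod K].
  by rewrite -(modn_dvdm _ Kd) -G (modn_dvdm _ Kd).
have gfacts : forall c, (gvale d (p * c)) %% K \in SK K /\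
   chiK K (gvale d (p * c)) = ~~ (d <= (p * c) %% (2 * d)).
  by move=> c; apply: gval_facts => //; apply: ltn_pmod; rewrite muln_gt0 d0.
have [_ C] := @chi_prod K HK _ (Hs d) (fun c => gvale d (p * c)) (fun c _ => proj1 (gfacts c)).
rewrite -chi_mod GK chi_mod in C.
have C1 : chiK K 1 by case: HK => ->.
rewrite C1 in C.
rewrite odd_sum_count.
have -> : count (fun c => odd ((p * c) %/ d)) (Hs d) = count (fun c => ~~ chiK K (gvale d (p * c))) (Hs d).
  by apply: eq_count => c; rewrite odd_div_even // (proj2 (gfacts c)) negbK.
by rewrite -C.
Qed.

Lemma Hs_prime n : prime n -> odd n -> Hs n = index_iota 1 (n %/ 2).+1.
Proof.
move=> pn nodd.
have e : n = 2 * (n %/ 2) + 1 by have := modn2 n; rewrite nodd /=; have := divn_eq n 2; lia.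
rewrite /Hs /index_iota !subn1 /=.
have -> : n.-1 = n %/ 2 + (n %/ 2) by lia.
rewrite iotaD filter_cat.
rewrite (eq_in_filter (a2 := predT)); last first.
  move=> c; rewrite mem_iota => hc /=.
  rewrite coprime_sym prime_coprime // gtnNdvd //; try lia.
rewrite filter_predT (eq_in_filter (a2 := pred0)) ?filter_pred0 ?cats0 //.
move=> c; rewrite mem_iota => hc /=; apply/negbTE; apply/nandP; left; lia.
Qed.

Lemma kron_p d p : prime p -> kron d p = kron_prime d p.
Proof.
move=> pp; rewrite kronE ?prime_gt0 // primes_prime // big_seq1.
by rewrite logn_prime // eqxx expr1.
Qed.

Lemma prime_case d p : prime d -> d %% 4 = 1 -> prime p -> odd p -> ~~ (p %| d) ->
  ((-1 : int) ^+ (\sum_(c <- Hs d) (p * c) %/ d) = kron d p)%R.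
Proof.
move=> pd d4 pp podd pnd.
have dodd : odd d by have := modn2 d; lia.
have pnd' : p != d by apply: contraNneq pnd => ->.
have E := eisenstein p d pp pd pnd' podd dodd.
have Aev : ~~ odd (d %/ 2 * (p %/ 2)).
  rewrite oddM negb_and; apply/orP; left; have := modn2 (d %/ 2); lia.
have par : odd (\sum_(c <- Hs d) (p * c) %/ d) = odd (\sum_(c <- Hs p) (d * c) %/ p).
  move: Aev; rewrite -E oddD Hs_prime // Hs_prime //.
  by case: odd; case: odd.
have p1 : 1 < p by exact: prime_gt1.
have cdp : coprime d p by rewrite coprime_sym prime_coprime.
rewrite -signr_odd par (@parity_odd p d podd p1 cdp dodd).
have G := @gauss_odd p d podd p1 cdp.
rewrite Hs_prime // size_iota subn1 /= in G.
rewrite Hs_prime //.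
set mu := count _ _ in G *.
rewrite pow_nm1 // in G.
rewrite kron_p // /kron_prime.
have -> : (p == 2) = false by apply/negbTE; apply: contraTneq podd => ->.
rewrite (negbTE pnd) euler_crit //.
have p2 : p != 2 by apply: contraTneq podd => ->.
case: (odd mu) G => G /=; last by rewrite G eqxx.
have -> : (d ^ (p %/ 2) == 1 %[mod p]) = false.
  apply/negbTE; rewrite G modn_small ?modn_small //; lia.
by [].
Qed.

Lemma pow4_16 p : odd p -> p ^ 4 = 1 %[mod 16].
Proof.
move=> po; rewrite -modnXm.
have : p %% 16 < 16 by apply: ltn_pmod.
have : odd (p %% 16) by rewrite odd_mod.
move: (p %% 16) => r.
by do 16 (case: r => [|r] //).
Qed.

Lemma pow2_8 p : odd p -> p ^ 2 = 1 %[mod 8].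
Proof.
move=> po; rewrite -modnXm.
have : p %% 8 < 8 by apply: ltn_pmod.
have : odd (p %% 8) by rewrite odd_mod.
move: (p %% 8) => r.
by do 8 (case: r => [|r] //).
Qed.

Lemma pow_mult_1 p k K : p ^ k = 1 %[mod K] -> forall j, p ^ (k * j) = 1 %[mod K].
Proof. by move=> h j; rewrite expnM -modnXm h modnXm exp1n. Qed.

Lemma even_main d p : d %% 4 = 0 -> squarefree (d %/ 4) -> (d %/ 4) %% 4 \in [:: 2; 3] -> d != 8 ->
  prime p -> odd p -> ~~ (p %| d) -> ~~ odd (\sum_(c <- Hs d) (p * c) %/ d).
Proof.
move=> d4 sqm m23 d8 pp podd pnd.
set m := d %/ 4.
have dE : d = 4 * m by rewrite /m; have := divn_eq d 4; lia.
have cop : coprime p d by rewrite prime_coprime.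
have m0 : 0 < m by move: m23; rewrite !inE => /orP [] /eqP; lia.
have d0 : 0 < d by lia.
move: m23; rewrite !inE => /orP [] /eqP m4.
-
  set m' := m %/ 2.
  have mE : m = 2 * m' by rewrite /m'; have := divn_eq m 2; lia.
  have m'odd : odd m' by have := modn2 m'; lia.
  have m'3 : 2 < m' by have := modn2 m'; move: d8; rewrite dE mE => /eqP; lia.
  have c8 : coprime 8 m' by rewrite (@coprime_pexpl 3 2 m') // coprime2n.
  have T := totient_coprime c8.
  rewrite (totient_Hs _ m'3) (_ : 8 * m' = d) in T; last lia.
  rewrite (totient_Hs _ (_ : 2 < d)) in T; last lia.
  have sz : size (Hs d) = 4 * size (Hs m') by move: T; rewrite (_ : totient 8 = 4) //; lia.
  apply: (@even_case d p 16) => //; first by right; split => //; lia.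
  by rewrite sz; apply: pow_mult_1; apply: pow4_16.
- have modd : odd m by have := modn2 m; lia.
  have m3 : 2 < m by have := modn2 m; lia.
  have c4 : coprime 4 m by rewrite (@coprime_pexpl 2 2 m) // coprime2n.
  have T := totient_coprime c4.
  rewrite (totient_Hs _ m3) (_ : 4 * m = d) in T; last lia.
  rewrite (totient_Hs _ (_ : 2 < d)) in T; last lia.
  have sz : size (Hs d) = 2 * size (Hs m) by move: T; rewrite (_ : totient 4 = 2) //; lia.
  apply: (@even_case d p 8) => //; first by left; split => //; lia.
  by rewrite sz; apply: pow_mult_1; apply: pow2_8.
Qed.

Lemma count_gt_iota k B : count (fun c => k < c) (index_iota 1 B.+1) = B - minn B k.
Proof.
have := count_predC (fun c => c <= k) (index_iota 1 B.+1).
rewrite size_iota count_sumn.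
have -> : \sum_(i <- index_iota 1 B.+1) (i <= k : nat) = minn B k by rewrite sum_le_cnt.
have -> : count (predC (fun c => c <= k)) (index_iota 1 B.+1) = count (fun c => k < c) (index_iota 1 B.+1).
  by apply: eq_count => c /=; rewrite ltnNge.
lia.
Qed.

Lemma bigo2 p c : p %% 2 = 1 -> 0 < c < (p %/ 2).+1 -> bigo p (2 * c) = (p %/ 4 < c).
Proof.
move=> hp hc; rewrite /bigo modn_small; last by have := divn_eq p 2; lia.
by rewrite ltn_divLR //; lia.
Qed.

Lemma par8 p : p %% 2 = 1 ->
  (p %/ 2 - minn (p %/ 2) (p %/ 4)) %% 2 = (p * 1 %/ 8 + p * 3 %/ 8) %% 2.
Proof. move=> hp. lia. Qed.

Lemma case8 p : prime p -> odd p ->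
  ((-1 : int) ^+ (\sum_(c <- Hs 8) (p * c) %/ 8) = kron 8 p)%R.
Proof.
move=> pp podd.
have -> : Hs 8 = [:: 1; 3] by [].
rewrite !big_cons big_nil addn0.
have p1 : 1 < p by exact: prime_gt1.
have p2 : p != 2 by apply: contraTneq podd => ->.
have c2 : coprime 2 p by rewrite coprime2n.
have c8 : coprime 8 p by rewrite (@coprime_pexpl 3 2 p).
rewrite kron_p // /kron_prime (negbTE p2).
have -> : (p %| 8) = false.
  apply/negbTE; apply/negP => h.
  have : p %| gcdn 8 p by rewrite dvdn_gcd h dvdnn.
  by rewrite (eqP c8) dvdn1 => /eqP e; rewrite e in p1.
rewrite euler_crit //.
have G := @gauss_odd p 2 podd p1 c2.
rewrite Hs_prime // size_iota subn1 /= in G.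
have mu2 : count (fun c => bigo p (2 * c)) (index_iota 1 (p %/ 2).+1) = p %/ 2 - minn (p %/ 2) (p %/ 4).
  rewrite -count_gt_iota; apply: eq_in_count => c; rewrite mem_index_iota => hc.
  by apply: bigo2 => //; rewrite modn2 podd.
rewrite mu2 in G.
set mu := p %/ 2 - minn (p %/ 2) (p %/ 4) in G.
have G8 : 8 ^ (p %/ 2) = (p.-1) ^ (3 * mu) %[mod p].
  by rewrite (_ : 8 = 2 ^ 3) // -expnM mulnC expnM -modnXm G modnXm -expnM mulnC.
rewrite pow_nm1 // in G8.
have par : odd mu = odd (p * 1 %/ 8 + p * 3 %/ 8).
  have e : mu %% 2 = (p * 1 %/ 8 + p * 3 %/ 8) %% 2.
    by rewrite /mu par8 // modn2 podd.
  by move: e; rewrite !modn2; case: (odd mu); case: odd.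
rewrite -signr_odd -par.
have oddM3 : odd (3 * mu) = odd mu by rewrite oddM.
rewrite oddM3 in G8.
case: (odd mu) G8 => G8 /=; last by rewrite G8 eqxx.
have -> : (8 ^ (p %/ 2) == 1 %[mod p]) = false.
  apply/negbTE; rewrite G8 modn_small ?modn_small //; move: p1 p2; clear; lia.
by [].
Qed.

Local Open Scope ring_scope.

Theorem mainTheorem8 (d p : nat) :
  real_quad_disc d -> prime p -> ssrnat.odd p -> ~~ (p %| d)%N ->
  \prod_(1 <= c < d | (2 * c < d)%N)
      ((-1 : int) ^ (((p * c) %/ d)%N%:Z * kron d c))
  = kron d p ^+ ((d == 8%N) || prime d).
Proof.
move=> /andP [d1 cases] pp podd pnd.
rewrite lhs_red //.
case/orP: cases => [/andP [/eqP d4 sq] | /andP [/andP [/eqP d4 sq] m23]].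
- have dodd : odd d by have := modn2 d; lia.
  have d8 : (d == 8%N) = false by apply/negbTE; apply: contraTneq dodd => ->.
  case: (boolP (prime d)) => pd.
    by rewrite d8 /= expr1; apply: prime_case.
  by rewrite d8 /= expr0 -signr_odd (negbTE (odd_composite_even d p dodd d1 sq pd pp podd pnd)).
- case: (eqVneq d 8%N) => [de | d8].
    by rewrite de /= expr1; apply: case8.
  have npd : prime d = false.
    apply/negbTE; apply/negP => pd.
    have : (2 %| d)%N by rewrite (@dvdn_trans 4) // /dvdn d4.
    by rewrite dvdn_prime2 // => /eqP e; move: d4; rewrite -e.
  rewrite npd /= expr0 -signr_odd.
  by rewrite (negbTE (even_main d p d4 sq m23 d8 pp podd pnd)).
Qed.
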